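(* Let $n\ge 4$ be an integer, and let $I$ be chosen uniformly at random among the $2$-element subsets of $\{1,\ldots,n\}$. Then the probability that the sequence $(C_0(I),\ldots,C_{s(I)}(I))$ of Naruse-Newton coefficients of $I$ is unimodal is exactly $\frac{4}{n}$.
   Context: Partitions are drawn as Young diagrams $\mathbb{D}(\lambda)$ in English notation; $c_{i,j}$ is the cell in row $i$, column $j$. The hook length $h_\lambda(c)$ is the number of cells of $\mathbb{D}(\lambda)$ weakly right of $c$ in its row or weakly below $c$ in its column (counting $c$ once). For $\mu\subseteq\lambda$, an excited diagram of $\lambda/\mu$ is a subset of $\mathbb{D}(\lambda)$ obtained from $\mathbb{D}(\mu)$ by repeatedly replacing a cell $c_{i,j}\in D$ by $c_{i+1,j+1}$, allowed iff $c_{i+1,j+1}\in\mathbb{D}(\lambda)$ and none of $c_{i,j+1},c_{i+1,j},c_{i+1,j+1}$ lies in $D$; $\mathbb{E}(\lambda/\mu)$ is their set. A ribbon with $n$ cells is read from its lower-left to its upper-right cell, each successive cell directly right of or directly above the previous; it corresponds to the set of $i\in\{1,\ldots,n-1\}$ with cell $i$ directly below cell $i+1$. A descent set is a non-empty finite set $I$ of positive integers; $\lambda^I$ is the unique partition with $\lambda^I_1=\lambda^I_2$ such that the cells $c_{i,j}\in\mathbb{D}(\lambda^I)$ with fewer than three of $c_{i,j+1},c_{i+1,j},c_{i+1,j+1}$ in $\mathbb{D}(\lambda^I)$ form a ribbon corresponding to $I$; this ribbon is $\mathbb{D}(\lambda^I)\setminus\mathbb{D}(\mu^I)$ for a partition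 $\mu^I$. Let $s(I)=\lambda^I_1-1$. Naruse-Newton coefficients: every excited diagram of $\lambda^I/\mu^I$ meets row 1 in $\{c_{1,1},\ldots,c_{1,r}\}$, $0\le r\le s$; for $0\le j\le s(I)$, $C_j(I)=\sum_D\prod_{c\in D,\,c\notin\text{row }1}h_{\lambda^I}(c)$, summed over $D\in\mathbb{E}(\lambda^I/\mu^I)$ with exactly $s-j$ cells in row 1. A sequence $(x_k)_{k=0}^m$ is unimodal if there is an index $i$ with $0\le i\le m$ such that $x_0\le x_1\le\cdots\le x_i$ and $x_i\ge x_{i+1}\ge\cdots\ge x_m$. *)

(* Defs.v *)
From Stdlib Require Import ClassicalEpsilon.
From mathcomp Require Import all_boot all_order all_algebra.
Set Implicit Arguments. Unset Strict Implicit. Unset Printing Implicit Defensive.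

(* Cells of the plane are pairs (i, j) of nats, 1-indexed as in the paper:
   row i, column j.  A partition is a weakly decreasing seq of positive nats. *)
Definition is_partition (la : seq nat) : bool :=
  sorted geq la && all (fun x => 0 < x) la.

Definition inD (la : seq nat) (p : nat * nat) : bool :=
  (0 < p.1 <= size la) && (0 < p.2 <= nth 0 la p.1.-1).

Definition rim (la : seq nat) (p : nat * nat) : bool :=
  inD la p &&
  (inD la (p.1, p.2.+1) + inD la (p.1.+1, p.2) + inD la (p.1.+1, p.2.+1) < 3).

Definition rstep (a b : nat * nat) : bool :=
  ((b.1 == a.1) && (b.2 == a.2.+1)) || ((b.1.+1 == a.1) && (b.2 == a.2)).
Definition above (a b : nat * nat) : bool := (b.1.+1 == a.1) && (b.2 == a.2).

(* The set of cells S forms a ribbon (read from lower-left to upper-right,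
   cells numbered 1..N) corresponding to the descent set I. *)
Definition ribbon_of (I : seq nat) (S : nat * nat -> bool) : Prop :=
  exists cs : seq (nat * nat),
    [/\ uniq cs,
        (forall c, (c \in cs) = S c),
        (forall k, 0 < k < size cs -> rstep (nth (0,0) cs k.-1) (nth (0,0) cs k)) &
        (forall k, (k \in I) <->
           (0 < k < size cs /\ above (nth (0,0) cs k.-1) (nth (0,0) cs k)))].

Definition is_lamI (I : seq nat) (la : seq nat) : Prop :=
  [/\ is_partition la, nth 0 la 0 = nth 0 la 1 & ribbon_of I (rim la)].

Definition lamI (I : seq nat) : seq nat := epsilon (inhabits [::]) (is_lamI I).

Definition is_muI (la mu : seq nat) : Prop :=
  [/\ is_partition mu, (forall p, inD mu p -> inD la p) &
      (forall p, rim la p = inD la p && ~~ inD mu p)].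

Definition muI (I : seq nat) : seq nat := epsilon (inhabits [::]) (is_muI (lamI I)).

Definition sI (I : seq nat) : nat := (nth 0 (lamI I) 0).-1.

(* finite grid of cells containing D(la): 'I_R * 'I_C, 0-indexed *)
Definition cell (R C : nat) := ('I_R * 'I_C)%type.
Definition pos R C (c : cell R C) : nat * nat := ((c.1 : nat).+1, (c.2 : nat).+1).

Definition memD R C (D : {set cell R C}) (p : nat * nat) : bool :=
  [exists c in D, pos c == p].

Definition emove (la : seq nat) R C (D D' : {set cell R C}) : bool :=
  [exists c in D, exists c' : cell R C,
     [&& pos c' == ((pos c).1.+1, (pos c).2.+1), inD la (pos c'),
         ~~ memD D ((pos c).1, (pos c).2.+1),
         ~~ memD D ((pos c).1.+1, (pos c).2),
         ~~ memD D (pos c') &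
         D' == (D :\ c) :|: [set c']]].

Definition Dset (mu : seq nat) R C : {set cell R C} := [set c | inD mu (pos c)].

Definition excited (la mu : seq nat) R C (D : {set cell R C}) : bool :=
  connect (@emove la R C) (Dset mu R C) D.

Definition hook (la : seq nat) R C (c : cell R C) : nat :=
  #|[set c' : cell R C | inD la (pos c') &&
       (((c'.1 == c.1) && (c.2 <= c'.2)) || ((c'.2 == c.2) && (c.1 <= c'.1)))]|.

Definition NNcoef_gen (la mu : seq nat) (s j : nat) : nat :=
  \sum_(D : {set cell (size la) (nth 0 la 0)} |
          excited la mu D && (#|[set c in D | (c.1 : nat) == 0]| == s - j))
     \prod_(c in D | (c.1 : nat) != 0) hook la c.

Definition NNcoef (I : seq nat) (j : nat) : nat :=
  NNcoef_gen (lamI I) (muI I) (sI I) j.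

Definition unimodal (x : nat -> nat) (m : nat) : bool :=
  [exists i : 'I_m.+1, [forall k : 'I_m,
     ((k < i) ==> (x k <= x k.+1)) && ((i <= k) ==> (x k.+1 <= x k))]].

(* a subset of 'I_n, viewed as a subset of {1,...,n} *)
Definition descI n (I : {set 'I_n}) : seq nat := [seq (val i).+1 | i <- enum I].

(* Main.v *)
Require Import Defs.
From Stdlib Require Import ClassicalEpsilon.
From mathcomp Require Import all_boot all_order all_algebra.
From mathcomp Require Import zify.
Set Implicit Arguments. Unset Strict Implicit. Unset Printing Implicit Defensive.

Lemma inD_L (i j r c : nat) :
  inD [:: j; j; i.+1] (r, c) =
  ((r == 1) || (r == 2)) && (0 < c <= j) || (r == 3) && (0 < c <= i.+1).
Proof. rewrite /inD /=; case: r => [|[|[|[|r]]]] /=; lia. Qed.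

Lemma rim_L (i j r c : nat) : i < j ->
  rim [:: j; j; i.+1] (r, c) =
  ((r == 3) && (0 < c <= i.+1)) || ((r == 2) && (i.+1 <= c <= j)) || ((r == 1) && (c == j)).
Proof. move=> hij; rewrite /rim /= !inD_L; lia. Qed.

Definition Ecell (i j k : nat) : nat * nat :=
  if k <= i then (3, k.+1) else if k <= j then (2, k) else (1, j).

Lemma Ecell_inv i j k : i < j -> k <= j.+1 -> (Ecell i j k).2 + 2 = (Ecell i j k).1 + k.
Proof. rewrite /Ecell => hij hk; case: ifPn => h1; last case: ifPn => h2; simpl; lia. Qed.

Lemma lamI_exists (i j : nat) (I : seq nat) : i < j ->
  (forall k, (k \in I) = (k == i.+1) || (k == j.+1)) -> is_lamI I [:: j; j; i.+1].
Proof.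
move=> hij HI; split.
- rewrite /is_partition /=; lia.
- by [].
exists [seq Ecell i j k | k <- iota 0 j.+2]; split.
- rewrite map_inj_in_uniq ?iota_uniq // => x y; rewrite !mem_iota /= => hx hy E.
  have := Ecell_inv hij (_ : x <= j.+1); have := Ecell_inv hij (_ : y <= j.+1).
  rewrite E; lia.
- case=> r c; rewrite rim_L //; apply/mapP/idP.
  + case=> k; rewrite mem_iota /Ecell => hk; case: ifPn => h1; last case: ifPn => h2;
      case=> -> ->; lia.
  + move=> H.
    case/orP: H => [/orP [] | ].
    * move=> H; exists c.-1; first by rewrite mem_iota; lia.
      rewrite /Ecell ifT; last lia. congr pair; lia.
    * move=> H; exists c; first by rewrite mem_iota; lia.
      rewrite /Ecell ifF; last lia. rewrite ifT; last lia. congr pair; lia.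
    * move=> H; exists j.+1; first by rewrite mem_iota; lia.
      rewrite /Ecell ifF; last lia. rewrite ifF; last lia. congr pair; lia.
- move=> k; rewrite size_map size_iota => hk.
  rewrite !(nth_map 0) ?size_iota; try lia.
  rewrite !nth_iota; try lia.
  rewrite /rstep /Ecell /=.
  case: ifPn => h1; case: ifPn => h2; try case: ifPn => h3; try case: ifPn => h4; simpl; lia.
- move=> k; rewrite HI size_map size_iota.
  case hk: (0 < k < j.+2); last by split; [lia | case].
  rewrite !(nth_map 0) ?size_iota; try lia.
  rewrite !nth_iota; try lia.
  rewrite /above /Ecell /=.
  case: ifPn => h1; case: ifPn => h2; try case: ifPn => h3; try case: ifPn => h4; simpl; split; lia.
Qed.
Lemma col_inv (cs : seq (nat * nat)) :
  (forall k, 0 < k < size cs -> rstep (nth (0,0) cs k.-1) (nth (0,0) cs k)) ->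
  forall k, k < size cs ->
  (nth (0,0) cs k).2 + (nth (0,0) cs 0).1 = (nth (0,0) cs 0).2 + (nth (0,0) cs k).1 + k.
Proof.
move=> Hs; elim=> [|k IH] hk; first lia.
have := Hs k.+1; rewrite /= => /(_ (ltac:(lia))).
rewrite /rstep; move: IH => /(_ (ltac:(lia))).
case: (nth (0,0) cs k) => a1 a2; case: (nth (0,0) cs k.+1) => b1 b2 /=.
lia.
Qed.

Lemma lamI_unique (i j : nat) (I : seq nat) la : i < j ->
  (forall k, (k \in I) = (k == i.+1) || (k == j.+1)) -> is_lamI I la -> la = [:: j; j; i.+1].
Proof.
move=> hij HI [/andP [Hsort Hpos] H01 [cs [Hu Hmem Hstep HI']]].
set N := size cs in Hstep HI'. set L := nth 0 la 0 in H01.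
have HinD p : p \in cs -> inD la p by rewrite Hmem => /andP [].
have [hjN _] := (HI' j.+1).1 (ltac:(by rewrite HI eqxx orbT)).
have Hszla : 0 < size la.
  have h0 : 0 < N by lia.
  have := HinD _ (mem_nth (0,0) h0).
  by rewrite /inD => /andP [/andP [h1 h2] _]; lia.
have HLpos : 0 < L by apply: (all_nthP 0 Hpos).
have Hsz2 : 1 < size la.
  case: (ltnP 1 (size la)) => // h; move: H01; rewrite nth_default //; lia.
have Hidx p : p \in cs -> index p cs < N /\ nth (0,0) cs (index p cs) = p.
  by move=> hp; rewrite index_mem nth_index.
have Hinv := col_inv Hstep.
have Hr1 : rim la (1, L).
  rewrite /rim /inD /= -/L; lia.
have Hr2 : rim la (2, L).
  rewrite /rim /inD /= -H01; lia.
have [hk1 e1] := Hidx _ (etrans (Hmem _) Hr1).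
have [hk2 e2] := Hidx _ (etrans (Hmem _) Hr2).
have k1N : index (1, L) cs = N.-1.
  case: (ltnP (index (1,L) cs).+1 N) => h; last lia.
  have := Hstep (index (1,L) cs).+1 (ltac:(lia)); rewrite /= e1 /rstep.
  have := HinD _ (mem_nth (0,0) h).
  case: (nth (0,0) cs _) => b1 b2; rewrite /inD /=.
  case/andP => ha hb /orP [/andP [/eqP e /eqP e']|/andP [/eqP e /eqP e']]; last lia.
  by move: hb; rewrite e e' /= -/L; lia.
have k2N : index (2, L) cs = N.-2.
  have := Hinv _ hk1; have := Hinv _ hk2; rewrite e1 e2 /= k1N; lia.
have HN : N = j.+2.
  have : N.-1 \in I.
    apply/(HI' N.-1); split; first lia.
    by rewrite -k2N -k1N e1 e2 /above /= !eqxx.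
  rewrite HI; lia.
have Hrow t : 0 < t < N ->
    (nth (0,0) cs t.-1).1 = (nth (0,0) cs t).1 + ((t == i.+1) || (t == j.+1)).
  move=> ht; have := Hstep t ht; have [hA hB] := HI' t; rewrite HI in hA hB; rewrite /rstep.
  move: hA hB; rewrite /above.
  case: (nth (0,0) cs t.-1) => a1 a2; case: (nth (0,0) cs t) => b1 b2 /= hA hB.
  case E: ((t == i.+1) || (t == j.+1)).
  - by have [_ /andP [/eqP h1 _]] := hA E; move: E; lia.
  - move=> /orP [/andP [/eqP -> _]|hh]; first lia.
    by move: (hB (conj ht hh)); rewrite E.
have HrowN : (nth (0,0) cs j.+1).1 = 1.
  have -> : j.+1 = N.-1 by lia.
  by rewrite -k1N e1.
have Hrowk d : d <= j.+1 -> (nth (0,0) cs (j.+1 - d)).1 = 1 + (j.+1 - d <= j) + (j.+1 - d <= i).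
  elim: d => [|d IH] hd; first by rewrite subn0 HrowN; lia.
  have := Hrow (j.+1 - d) (ltac:(lia)).
  have -> : (j.+1 - d).-1 = j.+1 - d.+1 by lia.
  move=> ->; rewrite IH; lia.
have Hrowk' k : k <= j.+1 -> (nth (0,0) cs k).1 = 1 + (k <= j) + (k <= i).
  by move=> hk; have := Hrowk (j.+1 - k) (ltac:(lia)); rewrite subKn.
set l := size la.
have Hl : rim la (l, 1).
  rewrite /rim /inD /= -/l. have := (all_nthP 0 Hpos) l.-1 (ltac:(lia)); lia.
have [hk0 e0] := Hidx _ (etrans (Hmem _) Hl).
have k00 : index (l, 1) cs = 0.
  case: (posnP (index (l,1) cs)) => // h.
  have := Hstep (index (l,1) cs) (ltac:(lia)); rewrite e0 /rstep.
  have := HinD _ (mem_nth (0,0) (_ : (index (l,1) cs).-1 < N)).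
  move=> /(_ (ltac:(lia))).
  case: (nth (0,0) cs _) => b1 b2; rewrite /inD /= -/l; lia.
rewrite k00 in e0.
have Hl3 : l = 3 by have := Hrowk' 0 (ltac:(lia)); rewrite e0 /=; lia.
have HLj : L = j.
  have := Hinv j.+1 (ltac:(lia)); rewrite e0 /= Hrowk' //.
  have -> : j.+1 = N.-1 by lia. rewrite -k1N e1 /=; lia.
set x := nth 0 la 2.
have hx : 0 < x by apply: (all_nthP 0 Hpos); lia.
have Hr3 : rim la (3, x).
  rewrite /rim /inD /= -/l -/x Hl3; lia.
have [hk3 e3] := Hidx _ (etrans (Hmem _) Hr3).
have hx1 : x <= i.+1.
  have := Hinv _ hk3; have := Hrowk' (index (3,x) cs) (ltac:(lia)).
  rewrite e3 e0 /=; lia.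
have hx2 : i.+1 <= x.
  have := HinD _ (mem_nth (0,0) (_ : i < N)) => /(_ (ltac:(lia))).
  have := Hinv i (ltac:(lia)); have := Hrowk' i (ltac:(lia)).
  rewrite e0 /=; case: (nth (0,0) cs i) => b1 b2 /= hb1 h.
  have -> : b1 = 3 by lia.
  rewrite /inD /= -/l -/x Hl3; lia.
apply: (@eq_from_nth _ 0); first by rewrite -/l Hl3.
rewrite -/l Hl3; case=> [|[|[|k]]] // _ /=.
- by rewrite -H01; exact: HLj.
- by rewrite -/x; lia.
Qed.

Lemma lamI_val (i j : nat) (I : seq nat) : i < j ->
  (forall k, (k \in I) = (k == i.+1) || (k == j.+1)) -> lamI I = [:: j; j; i.+1].
Proof.
move=> hij HI; apply: (lamI_unique hij HI).
exact: (epsilon_spec (inhabits [::]) (is_lamI I) (ex_intro _ _ (lamI_exists hij HI))).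
Qed.

Definition mu0 (i j : nat) : seq nat :=
  if i is 0 then (if j is 1 then [::] else [:: j.-1]) else [:: j.-1; i].

Lemma inD_mu0 (i j r c : nat) : i < j ->
  inD (mu0 i j) (r, c) = ((r == 1) && (0 < c <= j.-1)) || ((r == 2) && (0 < c <= i)).
Proof.
move=> hij; rewrite /mu0 /inD /=.
case: i hij => [|i] hij; [case: j hij => [|[|j]] hij|]; case: r => [|[|[|r]]] /=; lia.
Qed.

Lemma mu0_ok (i j : nat) : i < j -> is_muI [:: j; j; i.+1] (mu0 i j).
Proof.
move=> hij; split.
- rewrite /is_partition /mu0; case: i hij => [|i] hij; [case: j hij => [|[|j]] hij|] => /=; lia.
- by case=> r c; rewrite inD_mu0 // inD_L; lia.
- by case=> r c; rewrite inD_mu0 // inD_L rim_L //; lia.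
Qed.

Lemma inD_muI (i j : nat) (I : seq nat) : i < j ->
  (forall k, (k \in I) = (k == i.+1) || (k == j.+1)) ->
  forall r c, inD (muI I) (r, c) = ((r == 1) && (0 < c <= j.-1)) || ((r == 2) && (0 < c <= i)).
Proof.
move=> hij HI r c.
have : is_muI (lamI I) (muI I).
  apply: (epsilon_spec (inhabits [::]) (is_muI (lamI I))).
  by exists (mu0 i j); rewrite (lamI_val hij HI); exact: mu0_ok.
rewrite (lamI_val hij HI) => -[_ H1 H2].
have := H2 (r, c); have := H1 (r, c).
rewrite rim_L // inD_L.
case: (inD (muI I) (r, c)); lia.
Qed.

Definition fp (i r u x y : nat) : bool :=
  ((x == 0) && (y < r)) || ((x == 1) && ((y < u) || (r < y))) || ((x == 2) && (u < y <= i)).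

Definition Fs (i j r u : nat) : {set cell 3 j} := [set c : cell 3 j | fp i r u c.1 c.2].

Lemma cell_eqE R C (z c : cell R C) : (z == c) = ((z.1 : nat) == c.1) && ((z.2 : nat) == c.2).
Proof. by []. Qed.

Lemma memD_F i j r u (x y : nat) :
  memD (Fs i j r u) (x, y) = [&& 0 < x <= 3, 0 < y <= j & fp i r u x.-1 y.-1].
Proof.
apply/existsP/idP.
- case=> -[[c1 h1] [c2 h2]] /andP [cin /eqP pc].
  move: cin; rewrite inE /= /pos /= in pc *; case: pc => <- <- /=; lia.
- move=> H.
  have h1 : x.-1 < 3 by lia.
  have h2 : y.-1 < j by lia.
  exists (Ordinal h1, Ordinal h2); rewrite inE /pos /=.
  apply/andP; split; first by move: H; lia.
  apply/eqP; congr pair; lia.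
Qed.

Lemma emove_u i j r u : 0 < u -> u <= r -> r < j -> u <= i -> i < j ->
  emove [:: j; j; i.+1] (Fs i j r u) (Fs i j r u.-1).
Proof.
move=> hu hur hrj hui hij.
have h1 : 1 < 3 by []. have h2 : 2 < 3 by [].
have hc : u.-1 < j by lia. have hc' : u < j by lia.
apply/existsP; exists (Ordinal h1, Ordinal hc); rewrite /Fs inE /=.
apply/andP; split; first by rewrite /fp /=; lia.
apply/existsP; exists (Ordinal h2, Ordinal hc').
have -> : (Fs i j r u.-1 == (Fs i j r u :\ (Ordinal h1, Ordinal hc)) :|: [set (Ordinal h2, Ordinal hc')]) = true.
  apply/eqP/setP => -[[z1 hz1] [z2 hz2]]; rewrite /Fs !inE !cell_eqE /fp /=; lia.
rewrite /pos /= inD_L !memD_F /fp /= xpair_eqE /=; lia.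
Qed.

Lemma emove_r i j r u : u < r -> r < j -> u <= i -> i < j ->
  emove [:: j; j; i.+1] (Fs i j r u) (Fs i j r.-1 u).
Proof.
move=> hur hrj hui hij.
have h0 : 0 < 3 by []. have h1 : 1 < 3 by [].
have hc : r.-1 < j by lia. have hc' : r < j by lia.
apply/existsP; exists (Ordinal h0, Ordinal hc); rewrite /Fs inE /=.
apply/andP; split; first by rewrite /fp /=; lia.
apply/existsP; exists (Ordinal h1, Ordinal hc').
have -> : (Fs i j r.-1 u == (Fs i j r u :\ (Ordinal h0, Ordinal hc)) :|: [set (Ordinal h1, Ordinal hc')]) = true.
  apply/eqP/setP => -[[z1 hz1] [z2 hz2]]; rewrite /Fs !inE !cell_eqE /fp /=; lia.
rewrite /pos /= inD_L !memD_F /fp /= xpair_eqE /=; lia.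
Qed.

Lemma emove_closed i j r u D : u <= r -> r < j -> u <= i -> i < j ->
  emove [:: j; j; i.+1] (Fs i j r u) D ->
  exists r' u', [/\ u' <= r', r' < j, u' <= i & D = Fs i j r' u'].
Proof.
move=> hur hrj hui hij /existsP [[[c1 h1] [c2 h2]]] /andP [cin /existsP [[[d1 g1] [d2 g2]]]].
case/andP => pc /andP [hin /andP [n1 /andP [n2 /andP [n3 /eqP ->]]]].
move: cin pc hin n1 n2 n3; rewrite /Fs inE /pos /= inD_L !memD_F xpair_eqE /= => cin pc hin n1 n2 n3.
case: c1 h1 cin pc hin n1 n2 n3 => [|[|c1]] h1 cin pc hin n1 n2 n3;
  move: cin n1 n2 n3; rewrite /fp /= => cin n1 n2 n3.
- have ed1 : d1 = 1 by lia.
  have ed2 : d2 = c2.+1 by lia.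
  have ec2 : c2 = r.-1 by clear -cin n1 hrj; lia.
  have hu : u < r by clear -cin n2 ec2 hrj h2; lia.
  exists r.-1, u; split; try lia.
  clear cin pc hin n1 n2 n3.
  apply/setP => -[[z1 hz1] [z2 hz2]]; rewrite !inE !cell_eqE /fp /=; lia.
- have ed1 : d1 = 2 by lia.
  have ed2 : d2 = c2.+1 by lia.
  have hc2 : c2 < i by clear -hin ed1 ed2; lia.
  have ec2 : c2 = u.-1 by clear -cin n1 hc2 hij hur; lia.
  have hu : 0 < u by clear -cin ec2 hur; lia.
  exists r, u.-1; split; try lia.
  clear cin pc hin n1 n2 n3.
  apply/setP => -[[z1 hz1] [z2 hz2]]; rewrite !inE !cell_eqE /fp /=; lia.
- lia.
Qed.

Lemma reach i j r u : u <= r -> r < j -> u <= i -> i < j ->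
  connect (@emove [:: j; j; i.+1] 3 j) (Fs i j j.-1 i) (Fs i j r u).
Proof.
move=> hur hrj hui hij.
have A d : d <= i -> connect (@emove [:: j; j; i.+1] 3 j) (Fs i j j.-1 i) (Fs i j j.-1 (i - d)).
  elim: d => [|d IH] hd; first by rewrite subn0 connect0.
  apply: connect_trans (IH (ltnW hd)) _; apply: connect1.
  have -> : i - d.+1 = (i - d).-1 by lia.
  apply: emove_u; lia.
have B d : d <= j.-1 - u -> connect (@emove [:: j; j; i.+1] 3 j) (Fs i j j.-1 u) (Fs i j (j.-1 - d) u).
  elim: d => [|d IH] hd; first by rewrite subn0 connect0.
  apply: connect_trans (IH (ltnW hd)) _; apply: connect1.
  have -> : j.-1 - d.+1 = (j.-1 - d).-1 by lia.
  apply: emove_r; lia.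
have := A (i - u) (leq_subr _ _); rewrite subKn // => /connect_trans; apply.
have := B (j.-1 - r) (ltac:(lia)); have -> // : j.-1 - (j.-1 - r) = r by lia.
Qed.

Lemma reach_closed i j D : i < j ->
  connect (@emove [:: j; j; i.+1] 3 j) (Fs i j j.-1 i) D ->
  exists r u, [/\ u <= r, r < j, u <= i & D = Fs i j r u].
Proof.
move=> hij /connectP [p Hp ->].
have : exists r u, [/\ u <= r, r < j, u <= i & Fs i j j.-1 i = Fs i j r u].
  by exists j.-1, i; split => //; lia.
elim: p (Fs i j j.-1 i) Hp => [|x p IH] D0 /=; first by [].
case/andP => hx hp [r [u [h1 h2 h3 E]]].
rewrite E in hx.
apply: IH hp _; exact: emove_closed hx.
Qed.

Lemma card_cells R C (P : pred (cell R C)) :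
  #|[set c | P c]| = \sum_(x < R) \sum_(y < C) P (x, y).
Proof.
rewrite -sum1_card big_mkcond /= pair_big /=; apply: eq_bigr => -[x y] _.
by rewrite inE; case: (P _).
Qed.

Lemma sum_interval (C lo hi : nat) (f : 'I_C -> bool) :
  (forall y : 'I_C, f y = (lo <= y < hi)) -> \sum_(y < C) f y = minn hi C - lo.
Proof.
move=> Hf; rewrite (eq_bigr (fun y : 'I_C => nat_of_bool (lo <= y < hi))); last by move=> y _; rewrite Hf.
clear Hf f; elim: C => [|C IH]; first by rewrite big_ord0; lia.
rewrite big_ord_recr /= IH; lia.
Qed.

Lemma sum3 (F : nat -> nat) : \sum_(x < 3) F x = F 0 + F 1 + F 2.
Proof. by rewrite !big_ord_recr big_ord0 /=. Qed.

Lemma prod3 (F : nat -> nat) : \prod_(x < 3) F x = F 0 * F 1 * F 2.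
Proof. by rewrite !big_ord_recr big_ord0 /= mul1n. Qed.

Definition h2 (i j y : nat) := j - y + (y <= i).
Definition h3 (i y : nat) := i.+1 - y.

Lemma ordE n (a b : 'I_n) : (a == b) = (val a == val b).
Proof. by []. Qed.

Ltac sumi lo hi :=
  rewrite (@sum_interval _ lo hi); last by
    let y := fresh "y" in let hy := fresh "hy" in
    move=> [y hy]; rewrite /pos /= inD_L ?ordE /=; lia.

Lemma hook_val1 i j (c : cell 3 j) : i < j -> (c.1 : nat) = 1 ->
  hook [:: j; j; i.+1] c = h2 i j c.2.
Proof.
move=> hij; case: c => -[c1 h1] [c2 h2'] /= e1; subst c1.
rewrite /hook card_cells !big_ord_recr big_ord0 /=.
sumi 0 0. sumi c2 j. sumi c2 (minn c2.+1 i.+1). rewrite /h2; lia.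
Qed.

Lemma hook_val2 i j (c : cell 3 j) : i < j -> (c.1 : nat) = 2 ->
  hook [:: j; j; i.+1] c = h3 i c.2.
Proof.
move=> hij; case: c => -[c1 h1] [c2 h2'] /= e1; subst c1.
rewrite /hook card_cells !big_ord_recr big_ord0 /=.
sumi 0 0. sumi c2 i.+1. rewrite /h3; lia.
Qed.

Lemma prod_cells R C (F : cell R C -> nat) :
  \prod_(c : cell R C) F c = \prod_(x < R) \prod_(y < C) F (x, y).
Proof. by rewrite pair_big; apply: eq_bigr => -[]. Qed.

Definition Pp i j r := \prod_(y < j | r < y) h2 i j y.
Definition Qp i j u := \prod_(y < j | y < u) h2 i j y.
Definition Rp i j u := \prod_(y < j | u < y <= i) h3 i y.
Definition G i j r := \sum_(u < i.+1 | u <= r) Qp i j u * Rp i j u.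

Lemma W_val i j r u : u <= r -> r < j -> i < j ->
  \prod_(c in Fs i j r u | (c.1 : nat) != 0) hook [:: j; j; i.+1] c = Pp i j r * (Qp i j u * Rp i j u).
Proof.
move=> hur hrj hij.
rewrite big_mkcond /= prod_cells !big_ord_recr big_ord0 /= mul1n.
rewrite big1; last by move=> y _; rewrite /= andbF.
rewrite mul1n mulnA; congr (_ * _).
- rewrite /Pp /Qp !(big_mkcond (fun y : 'I_j => _ < _)) -big_split /=.
  apply: eq_bigr => -[y hy] _; rewrite /Fs inE andbT hook_val1 //= /fp /=.
  case: (ltnP y u) => h; case: (ltnP r y) => h' /=; rewrite ?muln1 ?mul1n ?orbT //; lia.
- rewrite /Rp [RHS]big_mkcond /=.
  apply: eq_bigr => -[y hy] _; rewrite /Fs inE andbT hook_val2 //= /fp /=.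
Qed.


Lemma row0_F i j r u : r < j ->
  #|[set c in Fs i j r u | (c.1 : nat) == 0]| = r.
Proof.
move=> hrj; rewrite card_cells !big_ord_recr big_ord0 /=.
have T lo hi : forall f : 'I_j -> bool, (forall y : 'I_j, f y = (lo <= y < hi)) -> \sum_(y < j) f y = minn hi j - lo.
  by move=> f; apply: sum_interval.
rewrite (T 0 r); last by move=> [y hy]; rewrite /Fs !inE /fp /=; lia.
rewrite (T 0 0); last by move=> [y hy]; rewrite /Fs !inE /fp /=; lia.
rewrite (T 0 0); last by move=> [y hy]; rewrite /Fs !inE /fp /=; lia.
lia.
Qed.

Lemma NN_val i j mu k : i < j ->
  (forall r c, inD mu (r, c) = ((r == 1) && (0 < c <= j.-1)) || ((r == 2) && (0 < c <= i))) ->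
  k <= j.-1 ->
  NNcoef_gen [:: j; j; i.+1] mu j.-1 k = Pp i j (j.-1 - k) * G i j (j.-1 - k).
Proof.
move=> hij Hmu hk; set r0 := j.-1 - k.
have hr0 : r0 < j by lia.
have hDset : Dset mu 3 j = Fs i j j.-1 i.
  by apply/setP => -[[x hx] [y hy]]; rewrite !inE /pos /= Hmu /fp /=; lia.
rewrite /NNcoef_gen /excited /= hDset.
rewrite (eq_bigl (fun D => D \in (fun u : 'I_i.+1 => Fs i j r0 u) @: [set u : 'I_i.+1 | u <= r0])).
  rewrite big_imset /=.
    rewrite /G big_distrr /=; apply: eq_big => [u|u]; first by rewrite inE.
    by rewrite inE => hu; rewrite W_val //; lia.
  move=> u v; rewrite !inE => hu hv E.
  apply/eqP; rewrite ordE; apply/negPn/negP => ne.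
  have hu' := ltn_ord u; have hv' := ltn_ord v.
  case: (ltngtP u v) ne => // h _.
  - have hc : (u : nat) < j by lia.
    have := congr1 (fun D : {set cell 3 j} => (Ordinal (isT : 1 < 3), Ordinal hc) \in D) E.
    rewrite /Fs !inE /fp /=; lia.
  - have hc : (v : nat) < j by lia.
    have := congr1 (fun D : {set cell 3 j} => (Ordinal (isT : 1 < 3), Ordinal hc) \in D) E.
    rewrite /Fs !inE /fp /=; lia.
move=> D; apply/andP/imsetP.
- case=> /reach_closed -/(_ hij) [r [u [h1 h2 h3 ->]]].
  rewrite row0_F // => /eqP er.
  have hu : u < i.+1 by lia.
  exists (Ordinal hu); first by rewrite inE /=; lia.
  by rewrite /= er.
- case=> u; rewrite inE => hu ->; split.
  + apply: reach => //; have := ltn_ord u; lia.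
  + by rewrite row0_F.
Qed.

Lemma Pp_pos i j r : 0 < Pp i j r.
Proof. apply: prodn_cond_gt0 => -[y hy] _ /=; rewrite /h2; lia. Qed.

Lemma Rp_pos i j u : 0 < Rp i j u.
Proof. apply: prodn_cond_gt0 => -[y hy] /= h; rewrite /h3; lia. Qed.

Lemma Pp_rec i j r : 0 < r < j -> Pp i j r.-1 = h2 i j r * Pp i j r.
Proof.
case/andP => h0 hr; rewrite /Pp (bigD1 (Ordinal hr)) /=; last lia.
congr (_ * _); apply: eq_bigl => -[y hy]; rewrite ordE /=; lia.
Qed.

Lemma Qp_rec i j u : u < j -> Qp i j u.+1 = Qp i j u * h2 i j u.
Proof.
move=> hu; rewrite /Qp (bigD1 (Ordinal hu)) //= mulnC.
congr (_ * _); apply: eq_bigl => -[y hy]; rewrite ordE /=; lia.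
Qed.

Lemma Rp_rec i j u : u < i -> i < j -> Rp i j u = h3 i u.+1 * Rp i j u.+1.
Proof.
move=> hu hij; have hu' : u.+1 < j by lia.
rewrite /Rp (bigD1 (Ordinal hu')) /=; last lia.
congr (_ * _); apply: eq_bigl => -[y hy]; rewrite ordE /=; lia.
Qed.

Lemma Qp0 i j : Qp i j 0 = 1.
Proof. by rewrite /Qp big_pred0 // => -[y hy]. Qed.

Lemma Rpi i j : Rp i j i = 1.
Proof. by rewrite /Rp big_pred0 // => -[y hy] /=; lia. Qed.

Lemma G_big i j r : i < r -> G i j r = G i j r.-1.
Proof. by move=> h; rewrite /G; apply: eq_bigl => -[u hu] /=; lia. Qed.

Lemma G_rec i j r : 0 < r <= i -> G i j r = G i j r.-1 + Qp i j r * Rp i j r.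
Proof.
case/andP => h0 hr; have hr' : r < i.+1 by lia.
rewrite /G (bigD1 (Ordinal hr')) /=; last lia.
rewrite addnC; congr (_ + _); apply: eq_bigl => -[y hy]; rewrite ordE /=; lia.
Qed.

Lemma G0 i j : G i j 0 = Qp i j 0 * Rp i j 0.
Proof.
rewrite /G (bigD1 ord0) //= big_pred0 ?addn0 // => -[y hy]; rewrite ordE /=; lia.
Qed.

Lemma G_ident i j k : i < j -> k < i ->
  (j - i) * G i j k + i.+1 * Rp i j 0 = (i - k) * (Qp i j k.+1 * Rp i j k.+1).
Proof.
move=> hij; elim: k => [|k IH] hk.
- rewrite G0 Qp0 Qp_rec ?Qp0; last lia.
  rewrite (Rp_rec hk hij) /h2 /h3; set R := Rp i j 1; nia.
- rewrite G_rec /=; last lia.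
  rewrite mulnDr addnAC IH; last lia.
  rewrite (@Qp_rec i j k.+1); last lia.
  rewrite (@Rp_rec i j k.+1); [|lia|lia].
  rewrite /h2 /h3; set Q := Qp i j k.+1; set R := Rp i j k.+2.
  rewrite (_ : (k < i) = true) /=; last lia.
  have [a Ha] : exists a, i = k.+2 + a by exists (i - k.+2); lia.
  subst i.
  have [b Hb] : exists b, j = k.+3 + a + b by exists (j - k.+3 - a); lia.
  subst j.
  have -> : k.+2 + a - k = a.+2 by lia.
  have -> : (k.+2 + a).+1 - k.+2 = a.+1 by lia.
  have -> : k.+3 + a + b - (k.+2 + a) = b.+1 by lia.
  have -> : k.+2 + a - k.+1 = a.+1 by lia.
  have -> : k.+3 + a + b - k.+1 = a + b + 2 by lia.
  nia.
Qed.

Definition cc i j k := Pp i j (j.-1 - k) * G i j (j.-1 - k).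

Lemma cc_mono i j k : k.+1 <= j.-1 -> i < j.-1 - k -> cc i j k <= cc i j k.+1.
Proof.
move=> hk hi; rewrite /cc.
have -> : j.-1 - k.+1 = (j.-1 - k).-1 by lia.
rewrite Pp_rec; last lia.
rewrite -G_big //; have := Pp_pos i j (j.-1 - k); rewrite /h2; nia.
Qed.

Lemma t1 i j : 2 <= i -> i < j -> Pp i j i.-1 = (j - i + 1) * Pp i j i.
Proof. move=> h2i hij.
  have hi : 0 < i < j by lia.
  rewrite (@Pp_rec i j i hi); congr (_ * _); rewrite /h2; lia.
Qed.
Lemma t5 i j : 2 <= i -> i < j -> Rp i j i.-1 = 1.
Proof. move=> h2i hij.
  have := @Rp_rec i j i.-1 (ltac:(lia)) hij.
  rewrite (_ : i.-1.+1 = i); last by lia.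
  by rewrite Rpi /h3; lia.
Qed.
Lemma t3 i j : 2 <= i -> i < j -> Qp i j i = Qp i j i.-1 * (j - i + 2).
Proof. move=> h2i hij.
  have := @Qp_rec i j i.-1 (ltac:(lia)); rewrite (_ : i.-1.+1 = i) /h2; last lia.
  move=> ->; congr (_ * _); lia.
Qed.
Lemma t2 i j : 2 <= i -> i < j -> G i j i = G i j i.-1 + Qp i j i.
Proof. move=> h2i hij.
  by rewrite (@G_rec i j i) ?Rpi ?muln1 //; lia.
Qed.
Lemma t4 i j : 2 <= i -> i < j -> G i j i.-1 = G i j i.-2 + Qp i j i.-1.
Proof. move=> h2i hij.
  by rewrite (@G_rec i j i.-1) ?t5 ?muln1 //; lia.
Qed.
Lemma t6 i j : 2 <= i -> i < j -> (j - i) * G i j i.-2 + i.+1 * Rp i j 0 = 2 * Qp i j i.-1.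
Proof. move=> h2i hij.
  have h : i.-2 < i by lia.
  have := @G_ident i j i.-2 hij h.
  rewrite (_ : i - i.-2 = 2); last by lia.
  rewrite (_ : i.-2.+1 = i.-1); last by lia.
  by rewrite t5 // muln1.
Qed.
Lemma arith (P G2 Q1 R0 d i : nat) : 0 < P -> 0 < R0 -> d * G2 + i.+1 * R0 = 2 * Q1 ->
  (d + 1) * P * (G2 + Q1) < P * (G2 + Q1 + Q1 * (d + 2)).
Proof.
move=> hP hR e; rewrite (mulnC (d + 1)) -mulnA ltn_pmul2l //.
lia.
Qed.
Lemma cc_desc i j : 2 <= i -> i < j -> cc i j (j.-1 - i).+1 < cc i j (j.-1 - i).
Proof.
move=> h2i hij; rewrite /cc.
have -> : j.-1 - (j.-1 - i).+1 = i.-1 by lia.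
have -> : j.-1 - (j.-1 - i) = i by lia.
rewrite t1 // t2 // t4 // t3 //.
apply: arith; [exact: Pp_pos | exact: Rp_pos i j 0 | exact: t6].
Qed.

Lemma cc_last i j : 1 <= i -> i < j ->
  cc i j (j.-2).+1 * (i + j + 1) = cc i j j.-2 * (i * j).
Proof.
move=> h1i hij; rewrite /cc.
have -> : j.-1 - (j.-2).+1 = 0 by lia.
have -> : j.-1 - j.-2 = 1 by lia.
have e1 : Pp i j 0 = j * Pp i j 1.
  have h : 0 < 1 < j by lia.
  have := @Pp_rec i j 1 h; rewrite /= /h2 => ->; congr (_ * _); lia.
have e2 : G i j 1 = G i j 0 + Qp i j 1 * Rp i j 1.
  have h : 0 < 1 <= i by lia.
  by rewrite (@G_rec i j 1 h).
have e3 : Rp i j 0 = i * Rp i j 1.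
  have h : 0 < i by lia.
  rewrite (@Rp_rec i j 0 h hij) /h3; congr (_ * _); lia.
have e4 : Qp i j 1 = j.+1.
  have h : 0 < j by lia.
  rewrite (@Qp_rec i j 0 h) Qp0 /h2; lia.
rewrite e1 e2 G0 Qp0 e3 e4 mul1n.
set P := Pp i j 1; set R := Rp i j 1.
nia.
Qed.

Lemma G_pos i j r : 0 < G i j r.
Proof. rewrite /G (bigD1 ord0) //= Qp0 mul1n; have := Rp_pos i j 0; lia. Qed.

Lemma cc_pos i j k : 0 < cc i j k.
Proof. by rewrite /cc muln_gt0 Pp_pos G_pos. Qed.

Lemma cc_unimodal i j : i < j -> unimodal (cc i j) j.-1 = (i <= 1) || (j <= 3).
Proof.
move=> hij.
have [i0|i1|i2] := ltngtP i 1.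
- have -> : i = 0 by lia.
  rewrite /=; apply/existsP; exists ord_max; apply/forallP => -[k hk] /=.
  apply/andP; split; last lia.
  apply/implyP => _; apply: cc_mono; lia.
- have [jj|jj] := leqP j 3.
  + rewrite ?orbT ?orbF ?orTb ?orFb.
    have -> : i = 2 by lia. have -> : j = 3 by lia.
    apply/existsP; exists ord0; apply/forallP => -[k hk] /=.
    case: k hk => [|[|k]] hk //=.
    * have h : cc 2 3 1 < cc 2 3 0 := @cc_desc 2 3 isT isT. lia.
    * have h : cc 2 3 2 * 6 = cc 2 3 1 * 6 := @cc_last 2 3 isT isT. lia.
  + rewrite ?orbT ?orbF ?orTb ?orFb.
    apply/negbTE/negP => /existsP [p /forallP Hp].
    have hk1 : j.-1 - i < j.-1 by lia.
    have hk2 : j.-2 < j.-1 by lia.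
    have := Hp (Ordinal hk1); have := Hp (Ordinal hk2) => /=.
    have := @cc_desc i j (ltac:(lia)) hij.
    have := @cc_last i j (ltac:(lia)) hij.
    have := cc_pos i j j.-2.
    set c1 := cc i j (j.-1 - i); set c1' := cc i j (j.-1 - i).+1.
    set c2 := cc i j j.-2; set c2' := cc i j j.-2.+1.
    move=> hc2 hl hd /andP [_ H2] /andP [H1 _].
    have hp : p <= j.-1 - i.
      case: (leqP p (j.-1 - i)) => // h; move: H1; rewrite h /=; lia.
    have : p <= j.-2 by lia.
    move: H2 => /implyP H2 /H2 H2'.
    have hij' : i + j + 1 < i * j by nia.
    nia.
- rewrite ?orbT ?orbF ?orTb ?orFb.
  have -> : i = 1 by lia.
  have hj : 2 <= j by lia.
  have hp : j.-2 < j.-1.+1 by lia.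
  apply/existsP; exists (Ordinal hp); apply/forallP => -[k hk] /=.
  apply/andP; split; apply/implyP => hk'.
  + apply: cc_mono; lia.
  + have -> : k = j.-2 by lia.
    have := @cc_last 1 j isT hj; subst i; nia.
Qed.

Lemma unimodal_ext f g m : (forall k, k <= m -> f k = g k) -> unimodal f m = unimodal g m.
Proof.
move=> E; apply: eq_existsb => p; apply: eq_forallb => k.
by have := ltn_ord k; move=> hk; rewrite !E //; lia.
Qed.

Lemma descI2 n (x y : 'I_n) k : (k \in descI [set x; y]) = (k == (x : nat).+1) || (k == (y : nat).+1).
Proof.
apply/mapP/idP.
- by case=> z; rewrite mem_enum !inE => /orP [] /eqP -> ->; rewrite eqxx ?orbT.
- case/orP => /eqP ->; [exists x | exists y]; by rewrite // mem_enum !inE eqxx ?orbT.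
Qed.

Lemma main_pair n (x y : 'I_n) : x < y ->
  unimodal (NNcoef (descI [set x; y])) (sI (descI [set x; y])) = (x <= 1) || (y <= 3).
Proof.
move=> hxy.
have HI := descI2 x y.
have hl := lamI_val hxy HI.
rewrite /NNcoef /sI hl /=.
rewrite (@unimodal_ext _ (cc x y)); first exact: cc_unimodal.
move=> k hk /=; rewrite NN_val //; exact: inD_muI.
Qed.

Definition gcount (y : nat) := if y <= 3 then y else 2.

Lemma sum_gcount n : 4 <= n -> \sum_(y < n) gcount y = 2 * n - 2.
Proof.
elim: n => [|n IH] // hn.
case: (ltnP n 4) => h.
- have -> : n = 3 by lia. by rewrite !big_ord_recr big_ord0.
- by rewrite big_ord_recr /= IH // /gcount; case: ifP; lia.
Qed.

Lemma count_pairs n : 4 <= n ->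
  \sum_(x < n) \sum_(y < n) (((x : nat) < y) && ((x <= 1) || (y <= 3))) = 2 * n - 2.
Proof.
move=> hn; rewrite exchange_big /= -(sum_gcount hn); apply: eq_bigr => y _.
rewrite (@sum_interval n 0 (gcount y)); last by move=> x; rewrite /gcount; case: ifP; lia.
have := ltn_ord y; rewrite /gcount; case: ifP; lia.
Qed.

Lemma bin2_double n : 'C(n, 2) * 2 = n * n.-1.
Proof.
elim: n => [|n IH] //; rewrite binS bin1 mulnDl IH; case: n IH => //= n _; lia.
Qed.

Lemma ordE2 n (a b : 'I_n) : (a == b) = (nat_of_ord a == nat_of_ord b).
Proof. by []. Qed.

Theorem corollary6p3 (n : nat) (hn : (4 <= n)%N) :
  ((#|[set I : {set 'I_n} | (#|I| == 2)%N &&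
        unimodal (NNcoef (descI I)) (sI (descI I))]|%:R
   / #|[set I : {set 'I_n} | (#|I| == 2)%N]|%:R)%R : rat) = (4%:R / n%:R)%R.
Proof.
set A := [set p : 'I_n * 'I_n | ((p.1 : nat) < p.2) && ((p.1 <= 1) || (p.2 <= 3))].
have Hset : [set I : {set 'I_n} | (#|I| == 2)%N && unimodal (NNcoef (descI I)) (sI (descI I))]
    = (fun p : 'I_n * 'I_n => [set p.1; p.2]) @: A.
  apply/setP => S; rewrite inE; apply/andP/imsetP.
  - case=> /cards2P [x [y [nxy ->]]] U.
    case: (ltngtP x y) => h.
    + by exists (x, y) => //; rewrite inE /= h -main_pair.
    + exists (y, x); last by rewrite /= setUC.
      by rewrite inE /= h -main_pair // setUC.
    + by move: nxy; rewrite (_ : x = y) ?eqxx //; apply: val_inj.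
  - case=> -[x y]; rewrite inE /= => /andP [hxy hg] ->; split.
    + by rewrite cards2 ordE2 neq_ltn hxy.
    + by rewrite main_pair.
have Hinj : {in A &, injective (fun p : 'I_n * 'I_n => [set p.1; p.2])}.
  move=> [x1 y1] [x2 y2]; rewrite !inE /= => /andP [h1 _] /andP [h2 _] E.
  have m1 : x1 \in [set x2; y2] by rewrite -E !inE eqxx.
  have m2 : y1 \in [set x2; y2] by rewrite -E !inE eqxx orbT.
  have m3 : x2 \in [set x1; y1] by rewrite E !inE eqxx.
  have m4 : y2 \in [set x1; y1] by rewrite E !inE eqxx orbT.
  move: m1 m2 m3 m4; rewrite !inE => m1 m2 m3 m4.
  have D (a b c : 'I_n) : (a == b) || (a == c) -> (a : nat) = b \/ (a : nat) = c.
    by case/orP => /eqP ->; [left|right].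
  have := D _ _ _ m1; have := D _ _ _ m2; have := D _ _ _ m3; have := D _ _ _ m4.
  move=> {m1 m2 m3 m4 E D} d1 d2 d3 d4.
  have e1 : (x1 : nat) = x2 by lia.
  have e2 : (y1 : nat) = y2 by lia.
  by congr pair; apply: val_inj.
rewrite Hset card_in_imset // card_cells count_pairs // card_draws card_ord.
have hC := bin2_double n.
have hC0 : 'C(n, 2) != 0 by nia.
apply/eqP; rewrite GRing.eqr_div; first last.
- by rewrite Num.Theory.pnatr_eq0; lia.
- by rewrite Num.Theory.pnatr_eq0.
rewrite -GRing.natrM (_ : (4 : rat) = 4%:R)%R // -GRing.natrM Num.Theory.eqr_nat; apply/eqP; nia.
Qed.
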